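(* Let $G$ be a finitely generated virtually free group with finite inverse-closed generating set $X$, and let $H$ be a finitely generated subgroup of $G$. Then $\mathsf{GWP}(G,H,X)$ is a deterministic context-free language.
   Context: For a group $G$ with finite generating set $X$ (closed under inverses) and a subgroup $H \le G$, the generalised word problem $\mathsf{GWP}(G,H,X)$ is the set of words over $X$ that represent elements of $H$. A group is virtually free if it has a free subgroup of finite index. A language is deterministic context-free if it is accepted by a deterministic pushdown automaton. *)

(* Defs.v *)
From Stdlib Require List.
From mathcomp Require Import all_boot.

Set Implicit Arguments.
Unset Strict Implicit.
Unset Printing Implicit Defensive.

Section GroupDefs.
Variables (T : Type) (mul : T -> T -> T) (one : T) (inv : T -> T).

Record is_group : Prop := IsGroup {
  grp_mulA : forall x y z, mul x (mul y z) = mul (mul x y) z;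
  grp_mul1g : forall x, mul one x = x;
  grp_mulg1 : forall x, mul x one = x;
  grp_mulVg : forall x, mul (inv x) x = one;
  grp_mulgV : forall x, mul x (inv x) = one }.

Definition eval_word (s : seq T) : T := foldr mul one s.

Definition sletter (p : bool * T) : T := if p.1 then inv p.2 else p.2.

Definition generated_by (S : T -> Prop) (x : T) : Prop :=
  exists s : seq (bool * T), (forall p, List.In p s -> S p.2) /\
                             eval_word (map sletter s) = x.

Definition is_subgroup (H : T -> Prop) : Prop :=
  H one /\ (forall x y, H x -> H y -> H (mul x y)) /\ (forall x, H x -> H (inv x)).

Definition fg_subgroup (H : T -> Prop) : Prop :=
  is_subgroup H /\
  exists S : seq T, forall x, H x <-> generated_by (fun y => List.In y S) x.

Fixpoint reduced (s : seq (bool * T)) : Prop :=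
  match s with
  | p :: ((q :: _) as s') => ~ (p.2 = q.2 /\ p.1 <> q.1) /\ reduced s'
  | _ => True
  end.

Definition free_on (F B : T -> Prop) : Prop :=
  (forall x, F x <-> generated_by B x) /\
  (forall s : seq (bool * T), s <> [::] -> (forall p, List.In p s -> B p.2) ->
     reduced s -> eval_word (map sletter s) <> one).

Definition finite_index (F : T -> Prop) : Prop :=
  exists reps : seq T, forall g, exists r, List.In r reps /\ F (mul (inv r) g).

Definition virtually_free : Prop :=
  exists F : T -> Prop, is_subgroup F /\ (exists B, free_on F B) /\ finite_index F.

End GroupDefs.

Record dpda (Sigma : finType) := Dpda {
  dstate : finType;
  dstack : finType;
  dstart : dstate;
  dbottom : dstack;
  dfinal : pred dstate;
  dtrans : dstate -> option Sigma -> dstack -> option (dstate * seq dstack);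
  ddet : forall q Z a, dtrans q None Z <> None -> dtrans q (Some a) Z = None }.

Section DPDA.
Variables (Sigma : finType) (M : dpda Sigma).

Definition dconfig : Type := (dstate M * seq Sigma * seq (dstack M))%type.

Inductive dstep : dconfig -> dconfig -> Prop :=
| dstep_eps q w Z g q' u :
    dtrans q None Z = Some (q', u) -> dstep (q, w, Z :: g) (q', w, u ++ g)
| dstep_read q a w Z g q' u :
    dtrans q (Some a) Z = Some (q', u) -> dstep (q, a :: w, Z :: g) (q', w, u ++ g).

Inductive dsteps : dconfig -> dconfig -> Prop :=
| dsteps_refl c : dsteps c c
| dsteps_step c1 c2 c3 : dstep c1 c2 -> dsteps c2 c3 -> dsteps c1 c3.

Definition daccepts (w : seq Sigma) : Prop :=
  exists q g, dsteps (@dstart _ M, w, [:: @dbottom _ M]) (q, [::], g) /\ @dfinal _ M q.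

End DPDA.

Definition deterministic_context_free (Sigma : finType) (L : seq Sigma -> Prop) : Prop :=
  exists M : dpda Sigma, forall w, L w <-> daccepts M w.

(* Main.v *)
Require Import Defs.
From Stdlib Require List.
From mathcomp Require Import all_boot.
From Stdlib Require Import ClassicalEpsilon.
Set Implicit Arguments. Unset Strict Implicit. Unset Printing Implicit Defensive.

Definition pb (P : Prop) : bool := if excluded_middle_informative P then true else false.
Lemma pbP (P : Prop) : reflect P (pb P).
Proof. rewrite /pb; case: excluded_middle_informative => h; constructor => //. Qed.

Section Grp.
Variables (T : Type) (mul : T -> T -> T) (one : T) (inv : T -> T).
Hypothesis HG : is_group mul one inv.
Lemma mulA x y z : mul x (mul y z) = mul (mul x y) z. Proof. by case: HG. Qed.
Lemma mul1g x : mul one x = x. Proof. by case: HG. Qed.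
Lemma mulg1 x : mul x one = x. Proof. by case: HG. Qed.
Lemma mulVg x : mul (inv x) x = one. Proof. by case: HG. Qed.
Lemma mulgV x : mul x (inv x) = one. Proof. by case: HG. Qed.
Lemma mulKg x y : mul (inv x) (mul x y) = y. Proof. by rewrite mulA mulVg mul1g. Qed.
Lemma mulKVg x y : mul x (mul (inv x) y) = y. Proof. by rewrite mulA mulgV mul1g. Qed.
Lemma mulgK x y : mul (mul y x) (inv x) = y. Proof. by rewrite -mulA mulgV mulg1. Qed.
Lemma mulgKV x y : mul (mul y (inv x)) x = y. Proof. by rewrite -mulA mulVg mulg1. Qed.
Lemma mulg_injl x y z : mul x y = mul x z -> y = z.
Proof. by move=> h; rewrite -(mulKg x y) h mulKg. Qed.
Lemma mulg_injr x y z : mul y x = mul z x -> y = z.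
Proof. by move=> h; rewrite -(mulgK x y) h mulgK. Qed.
Lemma inv_uniq x y : mul x y = one -> y = inv x.
Proof. by move=> h; apply: (mulg_injl (x:=x)); rewrite h mulgV. Qed.
Lemma invK x : inv (inv x) = x.
Proof. by symmetry; apply: inv_uniq; rewrite mulVg. Qed.
Lemma invM x y : inv (mul x y) = mul (inv y) (inv x).
Proof. by symmetry; apply: inv_uniq; rewrite -mulA (mulA y) mulgV mul1g mulgV. Qed.
Lemma inv1 : inv one = one. Proof. by symmetry; apply: inv_uniq; rewrite mul1g. Qed.

Notation ev := (eval_word mul one).
Lemma ev_cat s t : ev (s ++ t) = mul (ev s) (ev t).
Proof. by elim: s => [|a s IH] /=; rewrite ?mul1g // IH mulA. Qed.
Lemma ev_rcons s a : ev (rcons s a) = mul (ev s) a.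
Proof. by rewrite -cats1 ev_cat /= mulg1. Qed.

Variables (A : finType) (ainv : A -> A) (phi : A -> T).
Hypothesis ainvK : involutive ainv.
Hypothesis phiV : forall a, phi (ainv a) = inv (phi a).
Definition evA (w : seq A) := ev (map phi w).
Definition rr : rel A := fun a b => b != ainv a.
Hypothesis free : forall w, w <> [::] -> sorted rr w -> evA w <> one.

Lemma evA_cat s t : evA (s ++ t) = mul (evA s) (evA t).
Proof. by rewrite /evA map_cat ev_cat. Qed.
Lemma evA_rcons s a : evA (rcons s a) = mul (evA s) (phi a).
Proof. by rewrite /evA map_rcons ev_rcons. Qed.
Lemma evA_invw u : evA (rev (map ainv u)) = inv (evA u).
Proof.
elim: u => [|a u IH] /=; first by rewrite inv1.
by rewrite rev_cons evA_rcons IH phiV -invM.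
Qed.

Lemma sorted_invw u : sorted rr u -> sorted rr (rev (map ainv u)).
Proof.
move=> h; rewrite rev_sorted sorted_map.
apply: sub_sorted h => x y; rewrite /relpre /rr => /eqP hn; apply/eqP => e.
by apply: hn; rewrite e ainvK.
Qed.

Lemma red_uniq u v : sorted rr u -> sorted rr v -> evA u = evA v -> u = v.
Proof.
elim: u v => [|a u IH] [|b v] //= su sv e.
- by exfalso; apply: (free (w:=b::v)) => //; rewrite -e.
- by exfalso; apply: (free (w:=a::u)) => //; rewrite e.
have su' := path_sorted su; have sv' := path_sorted sv.
case: (eqVneq a b) => [ab|nab].
  subst b; congr cons; apply: IH => //.
  by apply: (mulg_injl (x:=phi a)).
exfalso; apply: (free (w := rev (map ainv (a :: u)) ++ b :: v)).
- by case: (rev _).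
- rewrite /= rev_cons cat_rcons sorted_cat_cons /= sv andbT.
  have := sorted_invw (u:=a::u) su; rewrite /= rev_cons => ->.
  by rewrite /= /rr ainvK eq_sym.
- by rewrite evA_cat evA_invw /= -/(evA u) -/(evA v) e mulVg.
Qed.

Definition push (a : A) (st : seq A) :=
  if st is b :: st' then (if a == ainv b then st' else a :: st) else [:: a].
Definition srr : rel A := fun x y => x != ainv y.
Lemma stack_red st : sorted srr st -> sorted rr (rev st).
Proof. by rewrite rev_sorted. Qed.
Lemma push_sorted a st : sorted srr st -> sorted srr (push a st).
Proof.
case: st => [|b st] //= h; case: ifP => [_|/negbT nb]; first exact: path_sorted h.
by rewrite /= h andbT.
Qed.
Lemma evA_push a st : evA (rev (push a st)) = mul (evA (rev st)) (phi a).
Proof.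
case: st => [|b st] /=; first by rewrite /evA /= mulg1 mul1g.
case: ifP => [/eqP ->|_]; last by rewrite rev_cons evA_rcons.
by rewrite rev_cons evA_rcons phiV mulgK.
Qed.
Definition redS (s : seq A) := foldr push [::] s.
Lemma redS_sorted s : sorted srr (redS s).
Proof. by elim: s => //= a s IH; apply: push_sorted. Qed.
Lemma evA_redS s : evA (rev (redS s)) = evA (rev s).
Proof. by elim: s => //= a s IH; rewrite evA_push IH rev_cons evA_rcons. Qed.

Section Benois.
Variables (Q : finType) (step : Q -> A -> Q -> Prop) (eps : Q -> Q -> Prop) (p0 : Q).
Inductive E : Q -> Q -> Prop :=
| E_refl x : E x x
| E_eps x y : eps x y -> E x y
| E_trans x y z : E x y -> E y z -> E x z
| E_cancel x y z t a : step x a y -> E y z -> step z (ainv a) t -> E x t.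
Fixpoint SP (p : Q) (s : seq A) (q : Q) : Prop :=
  match s with
  | [::] => E p q
  | a :: s' => exists x y, SP p s' x /\ step x a y /\ E y q
  end.
Inductive PathS (p : Q) : seq A -> Q -> Prop :=
| PS_nil : PathS p [::] p
| PS_eps s x y : PathS p s x -> eps x y -> PathS p s y
| PS_step s x a y : PathS p s x -> step x a y -> PathS p (a :: s) y.

Lemma SP_E p s x q : SP p s x -> E x q -> SP p s q.
Proof.
case: s => [|a s] /=; first by move=> h1 h2; apply: E_trans h1 h2.
by move=> [y [z [h1 [h2 h3]]]] h4; exists y, z; split => //; split => //; apply: E_trans h3 h4.
Qed.

Lemma PathS_SP p s q : PathS p s q -> SP p (redS s) q.
Proof.
elim => [|s' x y _ IH he|s' x a y _ IH hs] /=.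
- exact: E_refl.
- by apply: SP_E IH (E_eps he).
- move: IH; case: (redS s') => [|b st] /=.
    by move=> h; exists x, y; split => //; split => //; apply: E_refl.
  move=> [x1 [y1 [h1 [h2 h3]]]]; case: ifP => [/eqP ea|_].
    subst a; apply: SP_E h1 _; apply: E_cancel h2 h3 hs.
  exists x, y; split; last by split => //; apply: E_refl.
  by exists x1, y1.
Qed.

Variable Val : Q -> T -> Prop.
Hypothesis Vstep : forall x a y v, step x a y -> Val x v -> Val y (mul v (phi a)).
Hypothesis Veps : forall x y v, eps x y -> Val x v -> Val y v.
Lemma E_Val x y : E x y -> forall v, Val x v -> Val y v.
Proof.
elim.
- by [].
- by move=> x1 y1 h v; apply: Veps h.
- by move=> x1 y1 z1 _ h1 _ h2 v hv; apply: h2; apply: h1.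
move=> x1 y1 z1 t1 a h1 _ IH h2 v hv.
have := Vstep h2 (IH _ (Vstep h1 hv)); by rewrite phiV mulgK.
Qed.
Lemma SP_Val p s q : SP p s q -> forall v, Val p v -> Val q (mul v (evA (rev s))).
Proof.
elim: s q => [|a s IH] q /=; first by move=> h v hv; rewrite /evA /= mulg1; apply: E_Val h v hv.
move=> [x [y [h1 [h2 h3]]]] v hv; apply: E_Val h3 _ _.
by rewrite rev_cons evA_rcons mulA; apply: Vstep h2 (IH _ h1 _ hv).
Qed.
End Benois.

Section DP.
Variables (X : finType) (iota : X -> T) (m : nat) (rep : 'I_m -> T).
Variables (Q : finType) (step : Q -> A -> Q -> Prop) (eps : Q -> Q -> Prop) (p0 : Q).
Variables (fin : 'I_m -> Q) (wc : option ('I_m * X) -> seq A) (tgt : option ('I_m * X) -> 'I_m).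
Variable P : T -> Prop.
Hypothesis h_start : evA (wc None) = rep (tgt None).
Hypothesis h_move : forall i x,
  evA (wc (Some (i, x))) = mul (mul (inv (rep i)) (iota x)) (rep (tgt (Some (i, x)))).
Hypothesis h_acc : forall g st i, sorted srr st -> evA (rev st) = mul g (rep i) ->
  (SP step eps p0 st (fin i) <-> P g).

Definition Lb := \max_(c : option ('I_m * X)) size (wc c).
Lemma size_wc c : size (wc c) <= Lb. Proof. exact: leq_bigmax. Qed.
Definition SS st : {set Q} := [set q | pb (SP step eps p0 st q)].
Definition dl (S : {set Q}) a : {set Q} :=
  [set q | pb (exists x y, x \in S /\ step x a y /\ E step eps y q)].
Lemma dl_SS st a : dl (SS st) a = SS (a :: st).
Proof.
apply/setP => q; rewrite !inE; apply/pbP/pbP => /=.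
  by move=> [x [y [hx [h1 h2]]]]; exists x, y; rewrite inE in hx; move/pbP: hx.
by move=> [x [y [hx [h1 h2]]]]; exists x, y; rewrite inE; split => //; apply/pbP.
Qed.
Definition Zt := (option A * {set Q})%type.
Definition pushsym (a : A) (Z : Zt) : seq Zt :=
  match Z.1 with
  | Some b => if a == ainv b then [::] else [:: (Some a, dl Z.2 a); Z]
  | None => [:: (Some a, dl Z.2 a); Z]
  end.
Fixpoint enc (st : seq A) : seq Zt :=
  match st with
  | [::] => [:: (None, SS [::])]
  | a :: st' => (Some a, SS st) :: enc st'
  end.
Lemma enc_push a st : exists Z g, enc st = Z :: g /\ pushsym a Z ++ g = enc (push a st)
                                  /\ Z.2 = SS st.
Proof.
case: st => [|b st] /=.
  by exists (None, SS [::]), [::]; rewrite /pushsym /= dl_SS.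
exists (Some b, SS (b :: st)), (enc st); split => //; split => //.
rewrite /pushsym /=; case: ifP => // _; by rewrite dl_SS.
Qed.
Lemma enc_cons st : exists Z g, enc st = Z :: g /\ Z.2 = SS st.
Proof. by case: st => [|b st] /=; eexists; eexists. Qed.

Definition St := ((option ('I_m * X) * 'I_Lb.+1) + ('I_m * bool))%type.
Definition tr (q : St) (o : option X) (Z : Zt) : option (St * seq Zt) :=
  match q, o with
  | inl (c, n), None =>
      if drop n (wc c) is a :: _ then Some (inl (c, inord n.+1), pushsym a Z)
      else Some (inr (tgt c, fin (tgt c) \in Z.2), [:: Z])
  | inl _, Some _ => None
  | inr _, None => None
  | inr (i, b), Some x => Some (inl (Some (i, x), ord0), [:: Z])
  end.
Lemma tr_det q Z a : tr q None Z <> None -> tr q (Some a) Z = None.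
Proof. by case: q => [[c n]|[i b]]. Qed.
Definition fnl (q : St) : bool := if q is inr (_, b) then b else false.
Definition M : dpda X := @Dpda X St Zt (inl (None, ord0)) (None, SS [::]) fnl tr tr_det.

Notation evX p := (ev (map iota p)).
Definition Good (p : seq X) (q : St) (stk : seq Zt) : Prop :=
  match q with
  | inl (c, n) => exists st, stk = enc st /\ sorted srr st /\
       mul (evA (rev st)) (evA (drop n (wc c))) = mul (evX p) (rep (tgt c))
  | inr (i, b) => exists st, stk = enc st /\ sorted srr st /\
       evA (rev st) = mul (evX p) (rep i) /\ b = (fin i \in SS st)
  end.

Lemma step_good p q r stk q' r' stk' :
  @dstep _ M (q, r, stk) (q', r', stk') -> Good p q stk ->
  (r' = r /\ Good p q' stk') \/ (exists x, r = x :: r' /\ Good (rcons p x) q' stk').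
Proof.
move=> h; inversion h; subst => /=; clear h.
- move=> hg; left; split => //; move: H0 hg; case: q => [[c n]|[i b]] //=.
  case hd: (drop n (wc c)) => [|a rest] [<- <-].
    move=> [st [e [s ev']]]; exists st.
    have [Z' [g' [e' hZ]]] := enc_cons st.
    move: e; rewrite e' => -[-> ->]; split => //; split => //.
    by rewrite hZ; split => //; move: ev'; rewrite /evA /= mulg1.
  move=> [st [e [s ev']]].
  have [Z' [g' [e' [hp hZ]]]] := enc_push a st.
  move: e; rewrite e' => -[-> ->]; exists (push a st); split => //; split.
    exact: push_sorted.
  have hn : n < size (wc c) by rewrite -subn_gt0 -size_drop hd.
  rewrite inordK; last by rewrite ltnS; exact: leq_trans hn (size_wc c).
  rewrite evA_push -mulA -ev'; congr mul.
  have: drop 1 (drop n (wc c)) = rest by rewrite hd /= drop0.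
  by rewrite drop_drop add1n => ->.
- move=> hg; right; exists a; split => //; move: H0 hg; case: q => [[c n]|[i b]] //= [<- <-].
  move=> [st [e [s [ev' hb]]]]; have [Z' [g' [e' hZ]]] := enc_cons st.
  move: e; rewrite e' => -[-> ->]; exists st; split => //; split => //.
  by rewrite drop0 h_move ev' map_rcons ev_rcons !mulA mulgK.
Qed.

Lemma dsteps_trans c1 c2 c3 : @dsteps _ M c1 c2 -> @dsteps _ M c2 c3 -> @dsteps _ M c1 c3.
Proof. by elim => // a b c h _ IH h2; apply: dsteps_step h (IH h2). Qed.

Lemma reach_good w c1 c2 : @dsteps _ M c1 c2 ->
  (exists p, w = p ++ c1.1.2 /\ Good p c1.1.1 c1.2) ->
  (exists p, w = p ++ c2.1.2 /\ Good p c2.1.1 c2.2).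
Proof.
elim => // [[[q r] s]] [[q' r'] s'] c3 hs _ IH [p [ew hg]]; apply: IH => /=.
case: (step_good hs hg) => [[-> g]|[x [er g]]]; first by exists p.
by exists (rcons p x); rewrite cat_rcons -er.
Qed.

Lemma good_stack p q stk : Good p q stk -> exists Z g, stk = Z :: g.
Proof.
case: q => [[c n]|[i b]] /= [st [-> _]]; have [Z [g [-> _]]] := enc_cons st; by eauto.
Qed.

Lemma busy_run k p c (n : 'I_Lb.+1) stk r : size (wc c) - n = k -> Good p (inl (c, n)) stk ->
  exists i b stk', @dsteps _ M (inl (c, n), r, stk) (inr (i, b), r, stk') /\
                   Good p (inr (i, b)) stk'.
Proof.
elim: k n stk => [|k IH] n stk hk hg; have [Z [g e]] := good_stack hg; subst stk.
- have hd : drop n (wc c) = [::] by apply/eqP; rewrite -size_eq0 size_drop hk.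
  have hs : @dstep _ M (inl (c, n), r, Z :: g) (inr (tgt c, fin (tgt c) \in Z.2), r, [:: Z] ++ g).
    by apply: dstep_eps; rewrite /= hd.
  case: (step_good hs hg) => [[_ g']|[x [e _]]]; last by move: (f_equal size e) => /= /n_Sn.
  exists (tgt c), (fin (tgt c) \in Z.2), ([:: Z] ++ g); split => //.
  by apply: dsteps_step hs _; apply: dsteps_refl.
- case hd: (drop n (wc c)) => [|a rest].
    by move: hk; rewrite -size_drop hd.
  have hs : @dstep _ M (inl (c, n), r, Z :: g) (inl (c, inord n.+1), r, pushsym a Z ++ g).
    by apply: dstep_eps; rewrite /= hd.
  case: (step_good hs hg) => [[_ g']|[x [e _]]]; last by move: (f_equal size e) => /= /n_Sn.
  have hn : n < size (wc c) by rewrite -subn_gt0 hk.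
  have hk' : size (wc c) - (@inord Lb n.+1) = k.
    rewrite inordK; last by rewrite ltnS; exact: leq_trans hn (size_wc c).
    by rewrite subnS hk.
  have [i [b [stk' [h1 h2]]]] := IH _ _ hk' g'.
  by exists i, b, stk'; split => //; apply: dsteps_step hs h1.
Qed.

Lemma idle_run r p i b stk : Good p (inr (i, b)) stk ->
  exists i' b' stk', @dsteps _ M (inr (i, b), r, stk) (inr (i', b'), [::], stk') /\
                     Good (p ++ r) (inr (i', b')) stk'.
Proof.
elim: r p i b stk => [|x r IH] p i b stk hg.
  by exists i, b, stk; rewrite cats0; split => //; apply: dsteps_refl.
have [Z [g e]] := good_stack hg; subst stk.
have hs : @dstep _ M (inr (i, b), x :: r, Z :: g) (inl (Some (i, x), ord0), r, [:: Z] ++ g).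
  by apply: dstep_read.
case: (step_good hs hg) => [[e _]|[x' [e g']]].
  by have := f_equal size e => /= h0; exfalso; exact: (n_Sn (size r) h0).
case: e => ?; subst x'.
have [i1 [b1 [stk1 [h1 h2]]]] := busy_run r (erefl _) g'.
have [i2 [b2 [stk2 [h3 h4]]]] := IH _ _ _ _ h2.
exists i2, b2, stk2; rewrite -cat_rcons; split => //.
by apply: dsteps_step hs _; apply: dsteps_trans h1 h3.
Qed.

Lemma dp_main : deterministic_context_free (fun w : seq X => P (evX w)).
Proof.
exists M => w; split.
- move=> hP.
  have g0 : Good [::] (inl (None, ord0)) [:: (None, SS [::])].
    exists [::]; split => //; split => //=.
    by rewrite drop0 h_start /evA /= !mul1g.
  have [i1 [b1 [stk1 [h1 h2]]]] := busy_run w (erefl _) g0.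
  have [i2 [b2 [stk2 [h3 h4]]]] := idle_run w h2.
  exists (inr (i2, b2)), stk2; split; first exact: dsteps_trans h1 h3.
  move: h4 => /= [st [_ [s [ev' ->]]]]; rewrite inE; apply/pbP.
  by apply/(h_acc s ev').
- move=> [q [stk [h hf]]].
  have := reach_good (w := w) h; case.
    exists [::]; split => //=; exists [::]; split => //; split => //=.
    by rewrite drop0 h_start /evA /= !mul1g.
  move=> p /= [ew]; rewrite cats0 in ew; subst p.
  clear h; case: q hf => [[c n]|[i b]] //= -> [st [_ [s [ev' hb]]]].
  move: hb; rewrite inE => /esym /pbP hsp.
  exact: (proj1 (h_acc s ev') hsp).
Qed.
End DP.

Section Edges.
Variables (Ed Q0 : finType) (src tgte : Ed -> Q0) (lab : Ed -> seq A).
Definition Lm := \max_(e : Ed) size (lab e).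
Definition EQ := (Q0 + (Ed * 'I_Lm.+1))%type.
Definition pos (e : Ed) (k : nat) : EQ :=
  if k == 0 then inl (src e) else if k == size (lab e) then inl (tgte e)
  else inr (e, inord k).
Definition estep (x : EQ) (a : A) (y : EQ) : Prop :=
  exists e k rest, drop k (lab e) = a :: rest /\ x = pos e k /\ y = pos e k.+1.
Definition eeps (x y : EQ) : Prop :=
  exists e, lab e = [::] /\ x = inl (src e) /\ y = inl (tgte e).
Lemma size_lab e : size (lab e) <= Lm. Proof. exact: leq_bigmax. Qed.

Lemma path_edge p s e : PathS estep eeps p s (inl (src e)) ->
  PathS estep eeps p (rev (lab e) ++ s) (inl (tgte e)).
Proof.
move=> h.
case hl: (lab e) => [|a0 l0].
  by apply: PS_eps h _; exists e.
have key : forall k, k <= size (lab e) -> PathS estep eeps p (rev (take k (lab e)) ++ s) (pos e k).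
  elim => [|k IH] hk; first by rewrite take0 /pos eqxx.
  have hk' : k < size (lab e) by [].
  rewrite (take_nth a0 hk') rev_rcons /=.
  apply: PS_step (IH (ltnW hk')) _.
  by exists e, k, (drop k.+1 (lab e)); split => //; apply: drop_nth.
have := key _ (leqnn _); rewrite take_size /pos hl /= eqxx.
by rewrite -hl.
Qed.

Variable V0 : Q0 -> T -> Prop.
Hypothesis hV : forall e v, V0 (src e) v -> V0 (tgte e) (mul v (evA (lab e))).
Definition EVal (x : EQ) (u : T) : Prop :=
  match x with
  | inl q => V0 q u
  | inr (e, k) => exists v, V0 (src e) v /\ u = mul v (evA (take k (lab e)))
  end.
Lemma valpos_in e k v : k <= size (lab e) -> V0 (src e) v ->
  EVal (pos e k) (mul v (evA (take k (lab e)))).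
Proof.
move=> hk hv; rewrite /pos; case: eqP => [->|k0]; first by rewrite take0 /evA /= mulg1.
case: eqP => [->|ks]; first by rewrite take_size; apply: hV.
exists v; split => //; rewrite inordK //.
by rewrite ltnS; apply: leq_trans hk (size_lab e).
Qed.
Lemma valpos_out e k u : k < size (lab e) -> EVal (pos e k) u ->
  exists v, V0 (src e) v /\ u = mul v (evA (take k (lab e))).
Proof.
move=> hk; rewrite /pos; case: eqP => [->|k0]; first by move=> h; exists u; rewrite take0 /evA /= mulg1.
case: eqP => [ks|ks]; first by move: hk; rewrite ks ltnn.
move=> [v [hv ->]]; exists v; split => //; rewrite inordK //.
by rewrite ltnS; apply: leq_trans (ltnW hk) (size_lab e).
Qed.
Lemma EVal_step x a y v : estep x a y -> EVal x v -> EVal y (mul v (phi a)).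
Proof.
move=> [e [k [rest [hd [-> ->]]]]] hx.
have hk : k < size (lab e) by rewrite -subn_gt0 -size_drop hd.
have [w [hw ->]] := valpos_out hk hx.
have hn : nth a (lab e) k = a by move: (drop_nth a hk); rewrite hd => -[].
rewrite -mulA -evA_rcons -hn -take_nth //; exact: valpos_in.
Qed.
Lemma EVal_eps x y v : eeps x y -> EVal x v -> EVal y v.
Proof.
move=> [e [hl [-> ->]]] /= hv; have := hV hv; by rewrite hl /evA /= mulg1.
Qed.
End Edges.
End Grp.


Lemma In_nth (U : Type) (d : U) (l : seq U) y : List.In y l -> exists i, i < size l /\ nth d l i = y.
Proof.
elim: l => //= a l IH [->|h]; first by exists 0.
by have [i [hi e]] := IH h; exists i.+1.
Qed.
Lemma nth_In (U : Type) (d : U) (l : seq U) i : i < size l -> List.In (nth d l i) l.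
Proof. by elim: l i => //= a l IH [|i] /=; [left | right; apply: IH]. Qed.
Lemma In_enum (N : finType) (k : N) : List.In k (enum (predT : {pred N})).
Proof.
have : k \in enum (predT : {pred N}) by rewrite mem_enum.
elim: (enum _) => //= a l IH; rewrite inE => /orP [/eqP ->|h]; [by left | right; exact: IH].
Qed.

Section Main.
Variables (T : Type) (mul : T -> T -> T) (one : T) (inv : T -> T).
Hypothesis HG : is_group mul one inv.
Variables (X : finType) (iota : X -> T).
Variables (F B : T -> Prop).
Hypothesis hF : is_subgroup mul one inv F.
Hypothesis hB : free_on mul one inv F B.
Variable reps : seq T.
Hypothesis hreps : forall g, exists r, List.In r reps /\ F (mul (inv r) g).
Variables (H : T -> Prop) (S : seq T).
Hypothesis hS : forall x, H x <-> generated_by mul one inv (fun y => List.In y S) x.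
Local Notation ev := (eval_word mul one).
Local Notation sl := (sletter inv).

Lemma FM x y : F x -> F y -> F (mul x y). Proof. by case: hF => _ [h _]; apply: h. Qed.
Lemma FV x : F x -> F (inv x). Proof. by case: hF => _ [_ h]; apply: h. Qed.

Definition m := size reps.
Definition rep (i : 'I_m) : T := nth one reps i.
Lemma cov h : exists i : 'I_m, F (mul h (rep i)).
Proof.
have [r [hr hf]] := hreps (inv h).
have [i [hi e]] := In_nth one hr.
exists (Ordinal hi); rewrite /rep /= e.
by have := FV hf; rewrite (invM HG) !(invK HG).
Qed.
Definition chooseI h : 'I_m := proj1_sig (constructive_indefinite_description _ (cov h)).
Lemma chooseI_spec h : F (mul h (rep (chooseI h))).
Proof. exact: proj2_sig (constructive_indefinite_description _ (cov h)). Qed.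

Definition i0 := chooseI one.
Definition nx i x := chooseI (mul (inv (rep i)) (iota x)).
Definition ns := size S.
Local Notation GL := ((bool * 'I_ns)%type).
Definition gl (s : GL) : T := sl (s.1, nth one S s.2).
Definition nsg j s := chooseI (mul (inv (rep j)) (gl s)).
Local Notation N := (option (('I_m * X) + (('I_m * GL) + ('I_m * 'I_m)))%type).
Definition need (k : N) : T :=
  match k with
  | None => rep i0
  | Some (inl (i, x)) => mul (mul (inv (rep i)) (iota x)) (rep (nx i x))
  | Some (inr (inl (j, s))) => mul (mul (inv (rep j)) (gl s)) (rep (nsg j s))
  | Some (inr (inr (j, i))) => mul (inv (rep j)) (rep i)
  end.

Arguments need : simpl never.
Definition hasw y := exists s : seq (bool * T), (forall p, List.In p s -> B p.2) /\ ev (map sl s) = y.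
Definition bw y : seq (bool * T) :=
  match excluded_middle_informative (hasw y) with
  | left h => proj1_sig (constructive_indefinite_description _ h)
  | right _ => [::]
  end.
Lemma bw_B y p : List.In p (bw y) -> B p.2.
Proof.
rewrite /bw; case: excluded_middle_informative => // h.
by case: (proj2_sig (constructive_indefinite_description _ h)) => h1 _; apply: h1.
Qed.
Lemma bw_ev y : F y -> ev (map sl (bw y)) = y.
Proof.
move=> hy; have hw : hasw y by case: hB => h _; have [s hs] := (proj1 (h y) hy); exists s.
rewrite /bw; case: excluded_middle_informative => // h.
by case: (proj2_sig (constructive_indefinite_description _ h)).
Qed.

Definition Bl := List.flat_map (fun k => List.map snd (bw (need k))) (enum (predT : {pred N})).
Lemma Bl_B y : List.In y Bl -> B y.
Proof.
move/List.in_flat_map => [k [_ /List.in_map_iff [p [<- hp]]]]; exact: bw_B hp.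
Qed.
Lemma Bl_need k p : List.In p (bw (need k)) -> List.In p.2 Bl.
Proof.
move=> h; apply/List.in_flat_map; exists k; split; first exact: In_enum.
by apply: List.in_map.
Qed.

Definition uq (l : seq T) := forall i j, i < size l -> j < size l -> nth one l i = nth one l j -> i = j.
Lemma exists_uq (l : seq T) : exists l', (forall y, List.In y l' <-> List.In y l) /\ uq l'.
Proof.
elim: l => [|a l [l' [h1 h2]]]; first by exists [::].
case: (classic (List.In a l')) => ha.
  exists l'; split => // y; rewrite h1 /=; split; [by right|case=> // <-; exact/h1].
exists (a :: l'); split => [y|]; first by rewrite /= h1.
move=> [|i] [|j] //= hi hj.
- by move=> e; exfalso; apply: ha; rewrite e; apply: nth_In.
- by move=> e; exfalso; apply: ha; rewrite -e; apply: nth_In.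
- by move=> e; rewrite (h2 i j).
Qed.
Definition Bu := proj1_sig (constructive_indefinite_description _ (exists_uq Bl)).
Lemma Bu_mem y : List.In y Bu <-> List.In y Bl.
Proof. by case: (proj2_sig (constructive_indefinite_description _ (exists_uq Bl))). Qed.
Lemma Bu_uq : uq Bu.
Proof. by case: (proj2_sig (constructive_indefinite_description _ (exists_uq Bl))). Qed.

Definition nb := size Bu.
Local Notation A := ((bool * 'I_nb)%type).
Definition ainv (a : A) : A := (~~ a.1, a.2).
Definition phi (a : A) : T := sl (a.1, nth one Bu a.2).
Lemma ainvK : involutive ainv. Proof. by case=> [[] i]. Qed.
Lemma phiV a : phi (ainv a) = inv (phi a).
Proof. by case: a => [[] i]; rewrite /phi /sletter /= ?(invK HG). Qed.
Local Notation evA := (evA mul one phi).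

Lemma evA_map w : evA w = ev (map sl (map (fun a : A => (a.1, nth one Bu a.2)) w)).
Proof. by rewrite /evA -map_comp. Qed.

Lemma free_A w : w <> [::] -> sorted (rr ainv) w -> evA w <> one.
Proof.
move=> hw hs; rewrite evA_map; case: hB => _ hf; apply: hf; move: hw hs.
- by case: w => // a w _ _.
- move=> _ _ p /List.in_map_iff [a [<- _]] /=; apply: Bl_B; apply/Bu_mem; exact: nth_In.
- move=> _; elim: w => //= a [|b w] IH //= /andP [hab hp]; split; last exact: IH.
  move=> [e n]; move: hab; rewrite /rr /ainv.
  have e2 : b.2 = a.2.
    by apply/val_inj/Bu_uq => //; rewrite ?ltn_ord ?e.
  move/negP; apply; apply/eqP; clear IH hp.
  case: b e n e2 => bb j /= _ n -> ; congr pair.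
  by case: (a.1) bb n => [] [].
Qed.

Definition conv (s : seq (bool * T)) : seq A :=
  pmap (fun p => omap (fun i => (p.1, i)) [pick i : 'I_nb | pb (nth one Bu i = p.2)]) s.
Lemma conv_ok s : (forall p, List.In p s -> List.In p.2 Bl) -> map phi (conv s) = map sl s.
Proof.
elim: s => //= p s IH h.
have [i [hi e]] := In_nth one (proj2 (Bu_mem p.2) (h p (or_introl erefl))).
have IH' := IH (fun q hq => h q (or_intror hq)).
case: pickP => [i' /pbP hi'|hn] /=.
  by rewrite IH' /phi /= hi'; case: p {h e hi'}.
by have := hn (Ordinal hi); rewrite /= e => /pbP [].
Qed.
Definition wF y := conv (bw y).
Lemma wF_ok k : F (need k) -> evA (wF (need k)) = need k.
Proof.
move=> hk; rewrite /evA conv_ok ?bw_ev // => p hp; exact: Bl_need hp.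
Qed.
Lemma F_evA w : F (evA w).
Proof.
case: hB => h _; apply/h; exists (map (fun a : A => (a.1, nth one Bu a.2)) w); split.
  move=> p /List.in_map_iff [a [<- _]] /=; apply: Bl_B; apply/Bu_mem; exact: nth_In.
by rewrite -evA_map.
Qed.

Local Notation Q0 := (option ('I_m * bool)).
Local Notation Ed := (option (('I_m * GL) + ('I_m * 'I_m))).
Definition okF (j i : 'I_m) := pb (F (mul (inv (rep j)) (rep i))).
Definition esrc (e : Ed) : Q0 :=
  match e with None => None | Some (inl (j, _)) => Some (j, false) | Some (inr (j, _)) => Some (j, false) end.
Definition etgt (e : Ed) : Q0 :=
  match e with
  | None => Some (i0, false)
  | Some (inl (j, s)) => Some (nsg j s, false)
  | Some (inr (j, i)) => if okF j i then Some (i, true) else Some (j, false)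
  end.
Definition elab (e : Ed) : seq A :=
  match e with
  | None => wF (need None)
  | Some (inl (j, s)) => wF (need (Some (inr (inl (j, s)))))
  | Some (inr (j, i)) => if okF j i then wF (need (Some (inr (inr (j, i))))) else [::]
  end.
Definition V0 (q : Q0) (u : T) : Prop :=
  match q with None => u = one | Some (j, _) => exists g, H g /\ u = mul g (rep j) end.

Lemma H_one : H one. Proof. by apply/hS; exists [::]. Qed.
Lemma H_gl g s : H g -> H (mul g (gl s)).
Proof.
move/hS => [sg [h1 h2]]; apply/hS; exists (rcons sg (s.1, nth one S s.2)); split.
  move=> p; rewrite -cats1 => hp; case: (List.in_app_or _ _ _ hp) => [/h1 //|[<- /=|[]]]; exact: nth_In.
by rewrite map_rcons (ev_rcons HG) h2.
Qed.
Lemma F_i0 : F (rep i0). Proof. by have := chooseI_spec one; rewrite (mul1g HG). Qed.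

Lemma hV e v : V0 (esrc e) v -> V0 (etgt e) (mul v (evA (elab e))).
Proof.
case: e => [[[j s]|[j i]]|] /=.
- move=> [g [hg ->]]; exists (mul g (gl s)); split; first exact: H_gl.
  rewrite wF_ok; last exact: chooseI_spec.
  by rewrite /need !(mulA HG) (mulgK HG).
- rewrite /okF; case: pbP => hf.
    move=> [g [hg ->]]; exists g; split => //; rewrite wF_ok; last by rewrite /need.
    by rewrite /need !(mulA HG) (mulgK HG).
  by move=> hv; rewrite /evA /= (mulg1 HG).
- move=> ->; exists one; split; first exact: H_one.
  by rewrite wF_ok /need //; exact: F_i0.
Qed.

Lemma path_gen sg : (forall p, List.In p sg -> List.In p.2 S) ->
  exists j s, PathS (estep esrc etgt (lab := elab)) (eeps esrc etgt (lab := elab)) (inl None) s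
                (inl (Some (j, false))) /\ evA (rev s) = mul (ev (map sl sg)) (rep j).
Proof.
elim/last_ind: sg => [|sg p IH] h.
  exists i0, (rev (elab None) ++ [::]); split.
    exact: (path_edge (e := None) (PS_nil _ _ _)).
  rewrite cats0 revK /= wF_ok; [by rewrite /need (mul1g HG) | rewrite /need; exact: F_i0].
have [j [s [hp he]]] : exists j s, PathS (estep esrc etgt (lab := elab)) (eeps esrc etgt (lab := elab)) (inl None) s
                (inl (Some (j, false))) /\ evA (rev s) = mul (ev (map sl sg)) (rep j).
  apply: IH => q hq; apply: h; rewrite -cats1; apply: List.in_or_app; by left.
have hpS : List.In p.2 S by apply: h; rewrite -cats1; apply: List.in_or_app; right; left.
have [k [hk ek]] := In_nth one hpS.
pose sg' : GL := (p.1, Ordinal hk).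
exists (nsg j sg'), (rev (elab (Some (inl (j, sg')))) ++ s); split.
  exact: (path_edge (e := Some (inl (j, sg'))) hp).
rewrite rev_cat revK (evA_cat HG) he /= wF_ok; last exact: chooseI_spec.
rewrite map_rcons (ev_rcons HG) /= !(mulA HG) (mulgK HG).
have -> : gl sg' = sl p by rewrite /gl /= ek -surjective_pairing.
by [].
Qed.

Lemma h_acc g st i : sorted (srr ainv) st -> evA (rev st) = mul g (rep i) ->
  SP ainv (estep esrc etgt (lab := elab)) (eeps esrc etgt (lab := elab)) (inl None) st
     (inl (Some (i, true))) <-> H g.
Proof.
move=> hs hev; split.
  move=> hsp.
  have := SP_Val HG phiV (EVal_step HG hV) (EVal_eps HG hV) hsp (v := one) erefl.
  move=> /= [h [hh]]; rewrite (mul1g HG) hev => e.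
  by rewrite (mulg_injr HG e).
move/hS => [sg [h1 h2]].
have [j [s [hp he]]] := path_gen h1.
rewrite h2 in he.
have hok : okF j i.
  apply/pbP.
  have := FM (FV (F_evA (rev s))) (F_evA (rev st)).
  by rewrite he hev (invM HG) -!(mulA HG) (mulKg HG).
have hp2 := path_edge (e := Some (inr (j, i))) hp.
rewrite /= hok in hp2.
have := PathS_SP ainv hp2; set s2 := redS ainv _ => hsp.
suff -> : st = s2 by [].
rewrite -(revK st) -(revK s2); congr rev.
apply: (red_uniq HG ainvK phiV free_A); rewrite ?stack_red //.
  exact: redS_sorted.
rewrite (evA_redS HG phiV) rev_cat revK (evA_cat HG) he hev /= wF_ok.
  by rewrite !(mulA HG) (mulgK HG).
by move/pbP: hok.
Qed.

Lemma main_dcf : deterministic_context_free (fun w : seq X => H (ev (map iota w))).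
Proof.
pose wc (c : option ('I_m * X)) := match c with None => wF (need None) | Some (i, x) => wF (need (Some (inl (i, x)))) end.
pose tgt (c : option ('I_m * X)) := match c with None => i0 | Some (i, x) => nx i x end.
apply: (@dp_main _ _ _ _ HG _ ainv phi phiV X iota m rep _ (estep esrc etgt (lab := elab))
  (eeps esrc etgt (lab := elab)) (inl None) (fun i => inl (Some (i, true))) wc tgt H).
- by rewrite /wc /tgt wF_ok /need //; exact: F_i0.
- by move=> i x; rewrite /wc wF_ok /need //; apply: chooseI_spec.
- exact: h_acc.
Qed.
End Main.

Unset Implicit Arguments.
Theorem theorem1p3
  (T : Type) (mul : T -> T -> T) (one : T) (inv : T -> T)
  (HG : is_group mul one inv)
  (X : finType) (iota : X -> T)
  (iota_inj : injective iota)
  (X_inv_closed : forall x : X, exists y : X, iota y = inv (iota x))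
  (X_generates : forall g : T, generated_by mul one inv (fun y => exists x, iota x = y) g)
  (G_vfree : virtually_free mul one inv)
  (H : T -> Prop) (H_fg : fg_subgroup mul one inv H) :
  deterministic_context_free (fun w : seq X => H (eval_word mul one (map iota w))).
Proof.
case: G_vfree => F [hF [[B hB] [reps hreps]]].
case: H_fg => _ [S hS].
exact: (main_dcf HG iota hF hB hreps hS).
Qed.
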